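(* Let $R>0$, $\mathbf{y}_1,\dots,\mathbf{y}_M\in\mathbb{R}^2$, and $\mathcal{N}'(r):=\sum_{l=1}^Mf(|\mathbf{y}_l|,r)$. If $R\le r_1\le r\le r_2$ with $r_2-r_1\le R/2$, then $$\mathcal{N}'(r_1)+\mathcal{N}'(r_2)\ge\mathcal{N}'(r).$$
   Context: For $d\ge0$, $r\ge0$: $f(d,r)=2r/R^2$ if $r\le R-d$; $f(d,r)=0$ if $r>R+d$ or $r<d-R$; $f(d,r)=\frac{2r}{\pi R^2}\arccos\big(\frac{d^2+r^2-R^2}{2dr}\big)$ otherwise. Thus $\mathcal{N}'$ is the derivative of the particle counting function $\mathcal{N}(r)=\sum_l|B_r(0)\cap B_R(\mathbf{y}_l)|/(\pi R^2)$. *)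

(* Defs.v *)
From Stdlib Require Import Reals Lra List.
Open Scope R_scope.

Definition norm2 (p : R * R) : R := sqrt (fst p ^ 2 + snd p ^ 2).

Definition fR (Rad d r : R) : R :=
  if Rle_dec r (Rad - d) then 2 * r / Rad ^ 2
  else if Rlt_dec (Rad + d) r then 0
  else if Rlt_dec r (d - Rad) then 0
  else 2 * r / (PI * Rad ^ 2) * acos ((d ^ 2 + r ^ 2 - Rad ^ 2) / (2 * d * r)).

Definition Nprime (Rad : R) (ys : list (R * R)) (r : R) : R :=
  fold_right (fun p acc => fR Rad (norm2 p) r + acc) 0 ys.

(* Main.v *)
Require Import Defs.
From Stdlib Require Import Reals Lra Psatz List.
From Coquelicot Require Import Coquelicot.
Open Scope R_scope.


Lemma chi_nonneg u : 0 <= u <= PI -> u * cos u <= sin u.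
Proof.
  intros [H0 H1].
  destruct (Req_dec u 0) as [->|Hu]. { rewrite sin_0; lra. }
  destruct (MVT_cor2 (fun x => sin x - x * cos x) (fun x => x * sin x) 0 u) as [c [Hc1 Hc2]].
  - lra.
  - intros c Hc. apply is_derive_Reals. auto_derive; auto. ring.
  - rewrite sin_0, Rmult_0_l, Rminus_0_r in Hc1.
    assert (0 <= sin c) by (apply sin_ge_0; lra).
    assert (0 <= c * sin c * (u - 0)) by (apply Rmult_le_pos; [apply Rmult_le_pos|]; lra). lra.
Qed.

Lemma L1 u v : 0 < u -> u <= v -> v <= PI -> u * sin v <= v * sin u.
Proof.
  intros Hu Huv Hv.
  destruct (Req_dec u v) as [->|Hne]. lra.
  destruct (MVT_cor2 (fun x => sin x / x) (fun x => (x * cos x - sin x) / (x*x)) u v) as [c [Hc1 Hc2]].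
  - lra.
  - intros c Hc. apply is_derive_Reals. auto_derive. lra. field. lra.
  - assert (c * cos c <= sin c) by (apply chi_nonneg; lra).
    assert ((c * cos c - sin c) / (c * c) <= 0).
    { unfold Rdiv. apply Rmult_le_0_r. lra. apply Rlt_le, Rinv_0_lt_compat; nra. }
    assert (sin v / v <= sin u / u) by nra.
    apply Rmult_le_compat_r with (r := u*v) in H1; [|nra].
    replace (sin v / v * (u * v)) with (u * sin v) in H1 by (field; lra).
    replace (sin u / u * (u * v)) with (v * sin u) in H1 by (field; lra).
    lra.
Qed.

Lemma L3 u v : 0 < u -> u <= v -> v <= PI/4 -> v * (sin u)^2 <= u * (sin v)^2.
Proof.
  intros Hu Huv Hv.
  assert (HPI := PI_RGT_0).
  destruct (Req_dec u v) as [->|Hne]. lra.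
  destruct (MVT_cor2 (fun x => (sin x)^2 / x) (fun x => (2 * x * sin x * cos x - (sin x)^2) / (x*x)) u v) as [c [Hc1 Hc2]].
  - lra.
  - intros c Hc. apply is_derive_Reals. auto_derive. lra. field. lra.
  - assert (Hs : 0 <= sin c) by (apply sin_ge_0; lra).
    assert (Hsx : sin c <= c) by (left; apply sin_lt_x; lra).
    assert (Hcos : 1/2 <= cos c).
    { rewrite <- cos_PI3. destruct (Req_dec c (PI/3)) as [E|E]; [rewrite E; lra|].
      left. apply cos_decreasing_1; lra. }
    assert (0 <= (2 * c * sin c * cos c - (sin c)^2) / (c * c)).
    { unfold Rdiv. apply Rmult_le_pos.
      replace (2 * c * sin c * cos c - sin c ^ 2) with (sin c * (2 * c * cos c - sin c)) by ring.
      apply Rmult_le_pos; nra. apply Rlt_le, Rinv_0_lt_compat; nra. }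
    assert (sin u ^2 / u <= sin v ^2 / v) by nra.
    apply Rmult_le_compat_r with (r := u*v) in H0; [|nra].
    replace (sin u ^2 / u * (u * v)) with (v * sin u ^2) in H0 by (field; lra).
    replace (sin v ^2 / v * (u * v)) with (u * sin v ^2) in H0 by (field; lra).
    lra.
Qed.
Lemma aux1 (a r1 x t : R) : 0 < a -> a <= r1 -> 0 <= x -> x <= a/2 -> 0 <= t -> t <= a/2 ->
  (r1 + t) * ((x + a/2)^2 - (x+t)^2) <= r1 * (a^2 - x^2).
Proof. intros.
  set (B := 3/4*a^2 - a*x - x^2 + 2*x*t + t^2).
  assert (HB : 0 <= B) by (unfold B; nra).
  assert (E: r1 * (a^2 - x^2) - (r1 + t) * ((x + a/2)^2 - (x+t)^2)
     = r1 * B - t * (a*x + a^2/4 - 2*x*t - t^2) ) by (unfold B; field).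
  assert (HB2 : a * B <= r1 * B) by nra.
  assert (0 <= a * B - t * (a*x + a^2/4 - 2*x*t - t^2)).
  { unfold B.
    replace (a * (3 / 4 * a ^ 2 - a * x - x ^ 2 + 2 * x * t + t ^ 2) - t * (a * x + a ^ 2 / 4 - 2 * x * t - t ^ 2))
      with (a * (3 / 4 * a ^ 2 - a * x - x ^ 2) + a*x*t - a^2*t/4 + (a*t^2 + 2*x*t^2 + t^3)) by field.
    assert (G1: 0 <= 3/4*a^2 - a*x - x^2) by nra.
    assert (G2: 0 <= a*t^2 + 2*x*t^2 + t^3) by (apply Rplus_le_le_0_compat; [|nra]; nra).
    destruct (Rle_dec x (a/4)).
    - assert (7/16*a^2 <= 3/4*a^2 - a*x - x^2) by nra.
      assert (a*(7/16*a^2) <= a*(3/4*a^2 - a*x - x^2)) by (apply Rmult_le_compat_l; lra).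
      assert (a^2*t/4 <= a^3/8) by nra.
      assert (0 <= a*x*t) by (apply Rmult_le_pos; [apply Rmult_le_pos|]; lra). replace (a^3) with (a*a^2) in * by ring. assert (0 <= a*a^2) by nra. lra.
    - assert (a/4 < x) by (apply Rnot_le_lt; auto).
      assert (0 <= a*t*(x - a/4)) by (apply Rmult_le_pos; [apply Rmult_le_pos|]; lra).
      assert (0 <= a*(3/4*a^2 - a*x - x^2)) by (apply Rmult_le_pos; lra). nra. }
  nra.
Qed.
Lemma PCxyz (a d x y z : R) : 0 < a -> 0 < d -> x <= y -> y <= z -> z - x <= a/2 ->
  a <= x + d -> x^2 <= a^2 -> y^2 <= a^2 -> z^2 <= a^2 -> x*y + d*(x+y) >= - a^2 ->
  (x+d)*(a^2-x^2) + (y+d)*(a^2-z^2) >= (y+d)*(a^2-y^2).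
Proof.
  intros.
  assert (K1p : 0 <= (x+d)*(a^2-x^2)) by (apply Rmult_le_pos; lra).
  assert (E : (x+d)*(a^2-x^2) + (y+d)*(a^2-z^2) - (y+d)*(a^2-y^2)
            = (x+d)*(a^2-x^2) - (y+d)*(z^2-y^2)) by ring.
  destruct (Rle_dec (z^2) (y^2)) as [Hzy|Hzy].
  { assert (0 <= (y+d)*(y^2-z^2)) by (apply Rmult_le_pos; lra). nra. }
  assert (Hz : 0 < z) by nra.
  destruct (Rlt_dec x 0) as [Hx|Hx].
  { assert (Hz2 : z^2 <= a^2/4) by nra.
    assert (0 <= (y+d)*(a^2/4 - z^2)) by (apply Rmult_le_pos; lra).
    assert (0 <= (y+d)*y^2) by (apply Rmult_le_pos; [lra | apply pow2_ge_0]).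
    assert (x^2 <= a^2/4) by nra.
    assert (0 <= (x+d)*(3/4*a^2 - x^2)) by (apply Rmult_le_pos; lra).
    assert (0 <= (3/2*(x+d) - (y+d))*(a^2/4)) by (apply Rmult_le_pos; [lra | nra]).
    nra. }
  destruct (Rle_dec x (a/2)) as [Hx2|Hx2].
  { assert (Hz2 : z^2 <= (x+a/2)^2) by nra.
    assert (A := aux1 a (x+d) x (y-x) ltac:(lra) ltac:(lra) ltac:(lra) Hx2 ltac:(lra) ltac:(lra)).
    replace (x + (y-x)) with y in A by ring. replace (x + d + (y-x)) with (y+d) in A by ring.
    assert (0 <= (y+d)*((x+a/2)^2 - z^2)) by (apply Rmult_le_pos; lra).
    nra. }
  assert (Q : a^2 - (x^2+x*y+y^2) - d*(x+y) <= 0).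
  { destruct (Rle_dec (a/4) d).
    - assert (3/4*a^2 <= x^2+x*y+y^2) by nra.
      assert (a^2/4 <= d*(x+y)) by nra. lra.
    - assert (3/4*a < x) by lra.
      assert (a^2 < x^2+x*y+y^2) by nra.
      assert (0 <= d*(x+y)) by nra. lra. }
  assert (KK : (x+d)*(a^2-x^2) - (y+d)*(a^2-y^2) = (y-x)*(-(a^2 - (x^2+x*y+y^2) - d*(x+y)))) by ring.
  assert (0 <= (y-x)*(-(a^2 - (x^2+x*y+y^2) - d*(x+y)))) by (apply Rmult_le_pos; lra).
  assert (0 <= (y+d)*(a^2-z^2)) by (apply Rmult_le_pos; lra).
  lra.
Qed.
Lemma PDxyz (a d x y z : R) : 0 < a -> 0 < d -> x <= y -> y <= z -> z - x <= a/2 ->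
  a <= x + d -> y^2 <= a^2 -> z^2 <= a^2 -> x*y + d*(x+y) < - a^2 -> y*z + d*(y+z) > - a^2 ->
  x^2 <= a^2 /\ (a^2-x^2) + (a^2-z^2) >= a^2-y^2.
Proof.
  intros.
  assert (Hxa : - a <= x).
  { destruct (Rle_dec (-a) x) as [h|h]; auto. exfalso.
    assert (z + d <= d - a/2) by lra.
    assert (a <= z + d) by lra.
    assert ((y+d)*(z+d) <= (z+d)*(z+d)) by nra.
    assert ((z+d)*(z+d) <= (d-a/2)*(d-a/2)) by nra.
    assert (2*a < d) by lra.
    nra. }
  assert (Hya : y <= a) by nra.
  split. nra.
  destruct (Rle_dec z 0).
  - assert (z^2 <= y^2) by nra. nra.
  - assert (x + a/2 > 0) by lra.
    assert (z^2 <= (x+a/2)^2) by nra.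
    assert (x < 0) by (destruct (Rlt_dec x 0); auto; nra).
    assert (x^2 <= a^2/4) by nra.
    assert ((x+a/2)^2 <= a^2/4) by nra.
    nra.
Qed.
Lemma PA (a d r1 r r2 : R) : 0 < a -> 0 < d -> a <= r1 -> r1 <= r -> r <= r2 -> r2 - r1 <= a/2 ->
  d + a < r2 -> (r-d)^2 <= a^2 ->
  r*r1 >= d^2 - a^2 /\ (r1-d)^2 <= a^2 /\ r1*(a^2-(r1-d)^2) >= r*(a^2-(r-d)^2).
Proof. intros. assert (r <= d + a) by nra. split; [nra|split]. nra.
 assert (Q: a^2 - (r1^2+r1*r+r^2) + 2*d*(r1+r) - d^2 <= 0) by nra.
 nra. Qed.

Definition cth (a d t : R) := (d ^ 2 + t ^ 2 - a ^ 2) / (2 * d * t).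

Lemma cth_props a d t : 0 < a -> 0 < d -> a <= t -> (t-d)^2 <= a^2 ->
  0 <= cth a d t <= 1 /\ 1 - cth a d t = (a^2 - (t-d)^2) / (2*d*t).
Proof.
  intros Ha Hd Ht Hs. unfold cth.
  assert (0 < 2*d*t) by nra.
  split; [split|].
  - apply Rmult_le_pos; [nra | apply Rlt_le, Rinv_0_lt_compat; lra].
  - apply Rmult_le_reg_r with (2*d*t); auto. unfold Rdiv. rewrite Rmult_assoc, Rinv_l by lra. nra.
  - field. lra.
Qed.

Lemma th_props a d t : 0 < a -> 0 < d -> a <= t -> (t-d)^2 <= a^2 ->
  let th := acos (cth a d t) in
  0 <= th <= PI/2 /\ 0 <= sin (th/2) /\ (sin (th/2))^2 = (a^2 - (t-d)^2) / (4*d*t).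
Proof.
  intros Ha Hd Ht Hs th.
  destruct (cth_props a d t Ha Hd Ht Hs) as [[C0 C1] C2].
  assert (Hb := acos_bound (cth a d t)). fold th in Hb.
  assert (Hc : cos th = cth a d t) by (apply cos_acos; lra).
  assert (Hth : th <= PI/2).
  { destruct (Rle_dec th (PI/2)) as [h|h]; auto.
    destruct (Req_dec th PI) as [E|E].
    - rewrite E, cos_PI in Hc. lra.
    - assert (cos th < 0) by (apply cos_lt_0; lra). lra. }
  assert (HPI := PI_RGT_0).
  split; [lra|split].
  - apply sin_ge_0; lra.
  - assert (H2 := cos_2a_sin (th/2)). replace (2*(th/2)) with th in H2 by field.
    assert (0 < 2*d*t) by nra.
    assert (E : (a^2 - (t-d)^2) / (4*d*t) = (1 - cth a d t)/2).
    { rewrite C2. clear - Hd Ha Ht. field. lra. }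
    rewrite E, <- Hc, H2. field.
Qed.

Lemma acos_anti x y : -1 <= x -> x <= y -> y <= 1 -> acos y <= acos x.
Proof.
  intros. destruct (Rle_dec (acos y) (acos x)) as [h|h]; auto.
  assert (Hx := acos_bound x). assert (Hy := acos_bound y).
  assert (cos (acos y) < cos (acos x)) by (apply cos_decreasing_1; lra).
  rewrite !cos_acos in H2 by lra. lra.
Qed.

Lemma cdiff a d t r : 0 < d -> 0 < t -> 0 < r ->
  cth a d t - cth a d r = (t - r) * (t*r - (d^2 - a^2)) / (2*d*t*r).
Proof. intros. unfold cth. field. lra. Qed.

Lemma cth_le a d t r : 0 < d -> 0 < t -> 0 < r -> 0 <= (t - r) * (t*r - (d^2 - a^2)) ->
  cth a d r <= cth a d t.
Proof.
  intros. assert (E := cdiff a d t r H H0 H1).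
  assert (0 <= (t - r) * (t*r - (d^2 - a^2)) / (2*d*t*r)).
  { apply Rmult_le_pos; auto. apply Rlt_le, Rinv_0_lt_compat. repeat apply Rmult_lt_0_compat; lra. }
  lra.
Qed.

Lemma combA r r1 th th1 s s1 : 0 < r -> 0 < r1 -> 0 <= th -> 0 < s -> 0 <= s1 ->
  th * s1 <= th1 * s -> r * s <= r1 * s1 -> r * th <= r1 * th1.
Proof.
  intros.
  assert (A : r1 * (th * s1) <= r1 * (th1 * s)) by (apply Rmult_le_compat_l; lra).
  assert (B : th * (r * s) <= th * (r1 * s1)) by (apply Rmult_le_compat_l; lra).
  assert ((r * th) * s <= (r1 * th1) * s) by nra.
  apply Rmult_le_reg_r with s; auto.
Qed.

Lemma combC d r r1 r2 th th1 th2 s s1 s2 k k1 k2 :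
  0 < d -> 0 < r -> 0 < r1 -> 0 < r2 -> 0 < s -> 0 <= s1 -> 0 <= s2 ->
  0 <= th -> 0 <= th1 -> 0 <= th2 ->
  th * s1 <= th1 * s -> th * s2^2 <= th2 * s^2 ->
  s^2 = k / (4*d*r) -> s1^2 = k1/(4*d*r1) -> s2^2 = k2/(4*d*r2) ->
  r * k <= r1 * k1 + r * k2 -> r * th <= r1 * th1 + r2 * th2.
Proof.
  intros Hd Hr Hr1 Hr2 Hs Hs1 Hs2 Ht Ht1 Ht2 A1 A3 E E1 E2 P.
  assert (Ek : k = 4*d*r*s^2) by (rewrite E; field; lra).
  assert (Ek1 : k1 = 4*d*r1*s1^2) by (rewrite E1; field; lra).
  assert (Ek2 : k2 = 4*d*r2*s2^2) by (rewrite E2; field; lra).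
  subst k k1 k2.
  assert (F : (r*s)^2 <= (r1*s1)^2 + r*r2*s2^2).
  { apply Rmult_le_reg_l with (4*d); [lra|]. nra. }
  assert (0 <= r2*th2) by nra.
  destruct (Rle_dec (r*s) (r1*s1)) as [h|h].
  - assert (r * th <= r1 * th1) by (apply (combA r r1 th th1 s s1); auto). lra.
  - assert (G1 : th * (r1*s1) * (r1*s1) <= th * (r1*s1) * (r*s)).
    { apply Rmult_le_compat_l; [apply Rmult_le_pos; nra | lra]. }
    assert (G2 : th * (r1 * s1) * (r*s) <= (r1*th1*s) * (r*s)).
    { apply Rmult_le_compat_r; [nra|].
      assert (r1 * (th * s1) <= r1 * (th1 * s)) by (apply Rmult_le_compat_l; lra). nra. }
    assert (G3 : r*r2*(th*s2^2) <= r*r2*(th2*s^2)).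
    { apply Rmult_le_compat_l; [nra|lra]. }
    assert (G4 : th * (r*s)^2 <= th * ((r1*s1)^2 + r*r2*s2^2)) by (apply Rmult_le_compat_l; lra).
    assert (Hp : 0 < r * s^2) by (apply Rmult_lt_0_compat; [lra | apply pow_lt; lra]).
    apply Rmult_le_reg_r with (r*s^2); auto.
    nra.
Qed.

Lemma combD d r r1 r2 th th1 th2 s s1 s2 k k1 k2 :
  0 < d -> 0 < r -> 0 < r1 -> 0 < r2 -> 0 < s ->
  0 <= th -> 0 <= th1 -> 0 <= th2 ->
  th * s1^2 <= th1 * s^2 -> th * s2^2 <= th2 * s^2 ->
  s^2 = k / (4*d*r) -> s1^2 = k1/(4*d*r1) -> s2^2 = k2/(4*d*r2) ->
  k <= k1 + k2 -> r * th <= r1 * th1 + r2 * th2.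
Proof.
  intros Hd Hr Hr1 Hr2 Hs Ht Ht1 Ht2 A1 A3 E E1 E2 P.
  assert (Ek : k = 4*d*r*s^2) by (rewrite E; field; lra).
  assert (Ek1 : k1 = 4*d*r1*s1^2) by (rewrite E1; field; lra).
  assert (Ek2 : k2 = 4*d*r2*s2^2) by (rewrite E2; field; lra).
  subst k k1 k2.
  assert (F : r*s^2 <= r1*s1^2 + r2*s2^2).
  { apply Rmult_le_reg_l with (4*d); [lra|]. nra. }
  assert (G1 : r1*(th*s1^2) <= r1*(th1*s^2)) by (apply Rmult_le_compat_l; lra).
  assert (G2 : r2*(th*s2^2) <= r2*(th2*s^2)) by (apply Rmult_le_compat_l; lra).
  assert (G3 : th*(r*s^2) <= th*(r1*s1^2 + r2*s2^2)) by (apply Rmult_le_compat_l; lra).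
  assert (Hp : 0 < s^2) by (apply pow_lt; lra).
  apply Rmult_le_reg_r with (s^2); auto.
  nra.
Qed.

Lemma fR_supp a d t : 0 < a -> 0 < d -> a <= t -> (t-d)^2 <= a^2 ->
  fR a d t = 2/(PI*a^2) * (t * acos (cth a d t)).
Proof.
  intros Ha Hd Ht Hs. assert (HPI := PI_RGT_0). unfold fR, cth.
  destruct (Rle_dec t (a - d)); [lra|].
  destruct (Rlt_dec (a + d) t); [nra|].
  destruct (Rlt_dec t (d - a)); [nra|].
  field. lra.
Qed.

Lemma fR_out a d t : 0 < a -> 0 < d -> a <= t -> a^2 < (t-d)^2 -> fR a d t = 0.
Proof.
  intros Ha Hd Ht Hs. unfold fR.
  destruct (Rle_dec t (a - d)); [lra|].
  destruct (Rlt_dec (a + d) t); [auto|].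
  destruct (Rlt_dec t (d - a)); [auto|].
  nra.
Qed.

Lemma fR_nonneg a d t : 0 < a -> 0 <= t -> 0 <= fR a d t.
Proof.
  intros Ha Ht. assert (HPI := PI_RGT_0). unfold fR.
  destruct (Rle_dec t (a - d)).
  { unfold Rdiv. apply Rmult_le_pos; [lra|]. apply Rlt_le, Rinv_0_lt_compat. apply pow_lt; lra. }
  destruct (Rlt_dec (a + d) t); [lra|].
  destruct (Rlt_dec t (d - a)); [lra|].
  apply Rmult_le_pos; [|apply acos_bound].
  unfold Rdiv. apply Rmult_le_pos; [lra|]. apply Rlt_le, Rinv_0_lt_compat.
  apply Rmult_lt_0_compat; [lra|apply pow_lt; lra].
Qed.

Lemma A1w th th1 : 0 < th -> th <= th1 -> th1 <= PI/2 ->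
  th * sin (th1/2) <= th1 * sin (th/2).
Proof.
  intros. assert (HPI := PI_RGT_0).
  assert (H2 := L1 (th/2) (th1/2) ltac:(lra) ltac:(lra) ltac:(lra)). nra.
Qed.

Lemma A3w th2 th : 0 <= th2 -> th2 <= th -> th <= PI/2 ->
  th * (sin (th2/2))^2 <= th2 * (sin (th/2))^2.
Proof.
  intros. assert (HPI := PI_RGT_0).
  destruct (Req_dec th2 0) as [E|E].
  { subst th2. replace (0/2) with 0 by field. rewrite sin_0. nra. }
  assert (H2 := L3 (th2/2) (th/2) ltac:(lra) ltac:(lra) ltac:(lra)). nra.
Qed.

Lemma main_d a d r1 r r2 : 0 < a -> 0 < d -> a <= r1 -> r1 <= r -> r <= r2 -> r2 - r1 <= a/2 ->
  fR a d r1 + fR a d r2 >= fR a d r.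
Proof.
  intros Ha Hd H1 H2 H3 H4.
  assert (HPI := PI_RGT_0).
  assert (N1 := fR_nonneg a d r1 Ha ltac:(lra)).
  assert (N2 := fR_nonneg a d r2 Ha ltac:(lra)).
  destruct (Rle_dec ((r-d)^2) (a^2)) as [Sr|Sr];
    [| apply Rnot_le_lt in Sr; rewrite (fR_out a d r) by lra; lra].
  rewrite (fR_supp a d r) by lra.
  assert (HC : 0 < 2/(PI*a^2)).
  { unfold Rdiv. apply Rmult_lt_0_compat; [lra|]. apply Rinv_0_lt_compat.
    apply Rmult_lt_0_compat; [lra|apply pow_lt; lra]. }
  set (C := 2/(PI*a^2)) in *.
  destruct (th_props a d r Ha Hd ltac:(lra) Sr) as [[T0 T1] [S0 SE]].
  set (th := acos (cth a d r)) in *.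
  destruct (Req_dec th 0) as [Z|Z].
  { rewrite Z. nra. }
  assert (Sp : 0 < sin (th/2)) by (apply sin_gt_0; lra).
  destruct (Rle_dec ((r2-d)^2) (a^2)) as [Sr2|Sr2].
  - rewrite (fR_supp a d r2) by lra. fold C.
    destruct (th_props a d r2 Ha Hd ltac:(lra) Sr2) as [[U0 U1] [V0 VE]].
    set (th2 := acos (cth a d r2)) in *.
    destruct (Rle_dec (r*r2) (d^2 - a^2)) as [B|B].
    +
      assert (Cl : cth a d r2 <= cth a d r).
      { apply cth_le; try lra. nra. }
      destruct (cth_props a d r2 Ha Hd ltac:(lra) Sr2) as [[P0 P1] _].
      destruct (cth_props a d r Ha Hd ltac:(lra) Sr) as [[Q0 Q1] _].
      assert (th <= th2) by (apply acos_anti; lra).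
      assert (r * th <= r2 * th2) by nra.
      assert (C*(r*th) <= C*(r2*th2)) by (apply Rmult_le_compat_l; lra). lra.
    + assert (Cl : cth a d r <= cth a d r2).
      { apply cth_le; try lra. nra. }
      destruct (cth_props a d r2 Ha Hd ltac:(lra) Sr2) as [[P0 P1] _].
      destruct (cth_props a d r Ha Hd ltac:(lra) Sr) as [[Q0 Q1] _].
      assert (Th2 : th2 <= th) by (apply acos_anti; lra).
      assert (A3 := A3w th2 th U0 Th2 T1).
      destruct (Rle_dec (d^2 - a^2) (r*r1)) as [B1|B1].
      *
        assert (Sr1 : (r1-d)^2 <= a^2).
        { destruct (Rle_dec d a); nra. }
        rewrite (fR_supp a d r1) by lra. fold C.
        destruct (th_props a d r1 Ha Hd ltac:(lra) Sr1) as [[W0 W1] [X0 XE]].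
        set (th1 := acos (cth a d r1)) in *.
        assert (Cl1 : cth a d r1 <= cth a d r).
        { apply cth_le; try lra. nra. }
        destruct (cth_props a d r1 Ha Hd ltac:(lra) Sr1) as [[R0 R1] _].
        assert (Th1 : th <= th1) by (apply acos_anti; lra).
        assert (A1 := A1w th th1 ltac:(lra) Th1 W1).
        assert (P := PCxyz a d (r1-d) (r-d) (r2-d) Ha Hd ltac:(lra) ltac:(lra) ltac:(lra)
                  ltac:(lra) Sr1 Sr Sr2 ltac:(nra)).
        replace (r1 - d + d) with r1 in P by ring. replace (r - d + d) with r in P by ring.
        assert (G := combC d r r1 r2 th th1 th2 (sin (th/2)) (sin (th1/2)) (sin (th2/2))
                  (a^2-(r-d)^2) (a^2-(r1-d)^2) (a^2-(r2-d)^2) Hd ltac:(lra) ltac:(lra) ltac:(lra)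
                  Sp X0 V0 ltac:(lra) ltac:(lra) ltac:(lra) A1 A3 SE XE VE ltac:(lra)).
        assert (C*(r*th) <= C*(r1*th1 + r2*th2)) by (apply Rmult_le_compat_l; lra). lra.
      *
        assert (P := PDxyz a d (r1-d) (r-d) (r2-d) Ha Hd ltac:(lra) ltac:(lra) ltac:(lra)
                  ltac:(lra) Sr Sr2 ltac:(nra) ltac:(nra)).
        destruct P as [Sr1 P].
        rewrite (fR_supp a d r1) by lra. fold C.
        destruct (th_props a d r1 Ha Hd ltac:(lra) Sr1) as [[W0 W1] [X0 XE]].
        set (th1 := acos (cth a d r1)) in *.
        assert (Cl1 : cth a d r <= cth a d r1).
        { apply cth_le; try lra. nra. }
        destruct (cth_props a d r1 Ha Hd ltac:(lra) Sr1) as [[R0 R1] _].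
        assert (Th1 : th1 <= th) by (apply acos_anti; lra).
        assert (A1 := A3w th1 th W0 Th1 T1).
        assert (G := combD d r r1 r2 th th1 th2 (sin (th/2)) (sin (th1/2)) (sin (th2/2))
                  (a^2-(r-d)^2) (a^2-(r1-d)^2) (a^2-(r2-d)^2) Hd ltac:(lra) ltac:(lra) ltac:(lra)
                  Sp ltac:(lra) ltac:(lra) ltac:(lra) A1 A3 SE XE VE ltac:(lra)).
        assert (C*(r*th) <= C*(r1*th1 + r2*th2)) by (apply Rmult_le_compat_l; lra). lra.
  -
    apply Rnot_le_lt in Sr2.
    assert (- a <= r - d) by nra.
    assert (Hr2 : d + a < r2).
    { destruct (Rlt_dec (d+a) r2) as [h|h]; auto. exfalso.
      assert (r2 - d <= a) by lra. assert (0 <= (a - (r2-d))*(a + (r2-d))) by (apply Rmult_le_pos; lra). nra. }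
    destruct (PA a d r1 r r2 Ha Hd H1 H2 H3 H4 Hr2 Sr) as [B1 [Sr1 K]].
    rewrite (fR_supp a d r1) by lra. fold C.
    destruct (th_props a d r1 Ha Hd ltac:(lra) Sr1) as [[W0 W1] [X0 XE]].
    set (th1 := acos (cth a d r1)) in *.
    assert (Cl1 : cth a d r1 <= cth a d r).
    { apply cth_le; try lra. nra. }
    destruct (cth_props a d r1 Ha Hd ltac:(lra) Sr1) as [[R0 R1] _].
    destruct (cth_props a d r Ha Hd ltac:(lra) Sr) as [[Q0 Q1] _].
    assert (Th1 : th <= th1) by (apply acos_anti; lra).
    assert (A1 := A1w th th1 ltac:(lra) Th1 W1).
    assert (Ps : r * sin (th/2) <= r1 * sin (th1/2)).
    { destruct (Rle_dec (r * sin (th/2)) (r1 * sin (th1/2))) as [h|h]; auto.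
      exfalso.
      apply Rnot_le_lt in h.
      assert (E1 : (r * sin (th/2))^2 = r*(a^2-(r-d)^2)/(4*d)).
      { rewrite Rpow_mult_distr, SE. field. lra. }
      assert (E2 : (r1 * sin (th1/2))^2 = r1*(a^2-(r1-d)^2)/(4*d)).
      { rewrite Rpow_mult_distr, XE. field. lra. }
      assert (0 <= r1 * sin (th1/2)) by (apply Rmult_le_pos; lra).
      assert (HH : (r1 * sin (th1/2))^2 < (r * sin (th/2))^2) by nra.
      rewrite E1, E2 in HH.
      assert (r*(a^2-(r-d)^2) <= r1*(a^2-(r1-d)^2)) by lra.
      assert (r*(a^2-(r-d)^2)/(4*d) <= r1*(a^2-(r1-d)^2)/(4*d)).
      { unfold Rdiv. apply Rmult_le_compat_r; [apply Rlt_le, Rinv_0_lt_compat; lra | lra]. }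
      lra. }
    assert (G := combA r r1 th th1 (sin (th/2)) (sin (th1/2)) ltac:(lra) ltac:(lra) ltac:(lra) Sp X0 A1 Ps).
    assert (C*(r*th) <= C*(r1*th1)) by (apply Rmult_le_compat_l; lra). lra.
Qed.

Lemma term a d r1 r r2 : 0 < a -> 0 <= d -> a <= r1 -> r1 <= r -> r <= r2 -> r2 - r1 <= a/2 ->
  fR a d r1 + fR a d r2 >= fR a d r.
Proof.
  intros Ha Hd H1 H2 H3 H4.
  destruct (Req_dec d 0) as [->|Hd0]; [|apply main_d; lra].
  assert (N2 := fR_nonneg a 0 r2 Ha ltac:(lra)).
  assert (N1 := fR_nonneg a 0 r1 Ha ltac:(lra)).
  destruct (Rle_dec r a) as [h|h].
  - assert (r1 = r) by lra. subst r1. lra.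
  - assert (fR a 0 r = 0).
    { unfold fR. destruct (Rle_dec r (a - 0)); [lra|].
      destruct (Rlt_dec (a + 0) r); [auto|lra]. }
    lra.
Qed.

Theorem lemma4p9 (Rad : R) (ys : list (R * R)) (r1 r r2 : R) :
  0 < Rad ->
  Rad <= r1 -> r1 <= r -> r <= r2 -> r2 - r1 <= Rad / 2 ->
  Nprime Rad ys r1 + Nprime Rad ys r2 >= Nprime Rad ys r.
Proof.
  intros Ha H1 H2 H3 H4.
  induction ys as [|p ys IH].
  - simpl. lra.
  - unfold Nprime in *. simpl.
    assert (T := term Rad (norm2 p) r1 r r2 Ha (sqrt_pos _) H1 H2 H3 H4).
    lra.
Qed.
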